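(* Let $\big((\mathbf{v},\psi,p),(\mathbf{v}',\psi',p')\big)$ be an autonomous MCNF–CCNF pair (as defined in the context). Then for all $\mathbf{x}\in\mathcal{X}$ and $t\ge0$, $$\frac{\mathrm{d}\psi(\mathbf{x},t)}{\mathrm{d}t}\in\mathrm{co}\left\{\mathbf{v}'(\psi(\mathbf{x},t)\mid\mathbf{x}')\ \middle|\ \mathbf{x}'\in\mathcal{X}'\right\},$$ where $\mathrm{co}$ denotes the convex hull.
   Context: Let $\mathcal{X}\subseteq\mathbb{R}^n$ be the state space. A continuous normalizing flow (CNF) on $\mathcal{X}$ is a triple $(\mathbf{v},\psi,p)$ of a continuously differentiable vector field $\mathbf{v}(\mathbf{x},t)$, a flow map $\psi(\mathbf{x},t)$ and time-dependent probability densities $p(\mathbf{x},t)$, $t\ge0$, with $\frac{\mathrm{d}}{\mathrm{d}t}\psi(\mathbf{x},t)=\mathbf{v}(\psi(\mathbf{x},t),t)$ and $\partial_tp=-\nabla_{\mathbf{x}}\cdot(\mathbf{v}p)$. A target density $q'$ lives on a target set $\mathcal{X}'\subset\mathcal{X}$. A conditional CNF (CCNF) is a family of CNFs $(\mathbf{v}'(\cdot\mid\mathbf{x}'),\psi'(\cdot\mid\mathbf{x}'),p'(\cdot\mid\mathbf{x}'))$, $\mathbf{x}'\in\mathcal{X}'$, with $p'(\cdot,T\mid\mathbf{x}')\approx\delta_{\mathbf{x}'}$ for some $T$. An MCNF for it is a CNF $(\mathbf{v},\psi,p)$ with $p(\mathbf{x},t)=\int_{\mathcal{X}'}p'(\mathbf{x},t\mid\mathbf{x}')q'(\mathbf{x}')\mathrm{d}\mathbf{x}'$;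 for such pairs the MCNF vector field is $\mathbf{v}(\mathbf{x},t)=\int_{\mathcal{X}'}\frac{\mathbf{v}'(\mathbf{x},t\mid\mathbf{x}')p'(\mathbf{x},t\mid\mathbf{x}')q'(\mathbf{x}')}{p(\mathbf{x},t)}\mathrm{d}\mathbf{x}'$. An MCNF–CCNF pair is autonomous if $\mathcal{X}=\mathcal{Z}\times\mathcal{T}$, $\mathcal{T}\subset\mathbb{R}$, $\mathbf{x}=(\mathbf{z},\tau)$, $\mathbf{x}'=(\mathbf{z}',\tau')$, $q'=q'_{\mathbf{z}}(\mathbf{z})q'_\tau(\tau)$, the CCNF vector field is time-independent, $\mathbf{v}'(\mathbf{x}\mid\mathbf{x}')=(\mathbf{v}'_{\mathbf{z}}(\mathbf{z}\mid\mathbf{z}'),v'_\tau(\tau\mid\tau'))$, flow map and density split accordingly ($\psi'=(\psi'_{\mathbf{z}},\psi'_\tau)$, $p'=p'_{\mathbf{z}}p'_\tau$), and for some $\tau_0\ne\tau_1$: $q'_\tau=\delta_{\tau_1}$ and $p'_\tau(\tau,t\mid\tau')=\delta_{\psi'_\tau(\tau_0,t\mid\tau')}(\tau)$. *)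

(* Defs.v *)
From HB Require Import structures.
From mathcomp Require Import all_boot all_order all_algebra.
From mathcomp Require Import all_classical all_reals all_analysis.
Set Implicit Arguments. Unset Strict Implicit. Unset Printing Implicit Defensive.
Import Order.TTheory GRing.Theory Num.Theory.
Import numFieldNormedType.Exports.
Local Open Scope classical_set_scope.
Local Open Scope ring_scope.

(* The z-component space Z = R^m, as row vectors, equipped with its Borel
   sigma-algebra (generated by the open sets) so that we can integrate over
   target points z'. *)
Definition Zsp (R : realType) (m : nat) := g_sigma_algebraType (@open 'rV[R]_m).

Definition conv_hull (R : realType) (V : lmodType R) (A : set V) : set V :=
  [set x | exists (k : nat) (w : 'I_k -> R) (a : 'I_k -> V),
      (forall i, 0 <= w i) /\ \sum_(i < k) w i = 1 /\
      (forall i, A (a i)) /\ x = \sum_(i < k) w i *: a i].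

Definition has_rderiv (R : realType) (V : normedModType R) (f : R -> V)
  (t : R) (d : V) : Prop :=
  (fun h : R => h^-1 *: (f (t + h) - f t)) @ (0 : R)^'+ --> d.

Definition rderiv (R : realType) (V : normedModType R) (f : R -> V) (t : R) : V :=
  lim ((fun h : R => h^-1 *: (f (t + h) - f t)) @ (0 : R)^'+).

Definition ccnf_vf (R : realType) (m : nat)
  (vz : 'rV[R]_m -> 'rV[R]_m -> 'rV[R]_m) (vtau : R -> R -> R)
  (x x' : 'rV[R]_m * R) : 'rV[R]_m * R :=
  (vz x.1 x'.1, vtau x.2 x'.2).

(* z-marginal of the MCNF density:
   p_z(z,t) = int_{Z'} p'_z(z,t|z') q'_z(z') dz', where (because q'_tau is the
   Dirac at tau1) the integration runs over Z'_{tau1} = {z' | (z',tau1) in X'}. *)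
Definition mcnf_pz (R : realType) (m : nat)
  (mu : {measure set (Zsp R m) -> \bar R}) (X' : set ('rV[R]_m * R)) (tau1 : R)
  (pz' : 'rV[R]_m -> R -> 'rV[R]_m -> R) (qz' : 'rV[R]_m -> R)
  (z : 'rV[R]_m) (t : R) : R :=
  Rintegral mu [set z' : Zsp R m | X' (z', tau1)] (fun z' => pz' z t z' * qz' z').

(* The MCNF vector field
     v(x,t) = int_{X'} v'(x|x') p'(x,t|x') q'(x') dx' / p(x,t)
   for an autonomous pair, after integrating out the Dirac deltas
   q'_tau = delta_{tau1} and p'_tau(.,t|tau') = delta_{psi'_tau(tau0,t|tau')}
   (the latter cancels between numerator and denominator):
     v((z,tau),t) = int_{Z'_{tau1}} v'((z,tau)|(z',tau1)) p'_z(z,t|z') q'_z(z') dz'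
                    / p_z(z,t),
   the vector-valued integral being taken componentwise. *)
Definition mcnf_vf (R : realType) (m : nat)
  (mu : {measure set (Zsp R m) -> \bar R}) (X' : set ('rV[R]_m * R)) (tau1 : R)
  (vz : 'rV[R]_m -> 'rV[R]_m -> 'rV[R]_m) (vtau : R -> R -> R)
  (pz' : 'rV[R]_m -> R -> 'rV[R]_m -> R) (qz' : 'rV[R]_m -> R)
  (x : 'rV[R]_m * R) (t : R) : 'rV[R]_m * R :=
  let Z'1 := [set z' : Zsp R m | X' (z', tau1)] in
  let w := fun z' : Zsp R m => pz' x.1 t z' * qz' z' in
  (mcnf_pz mu X' tau1 pz' qz' x.1 t)^-1 *:
    (\row_(i < m) Rintegral mu Z'1
        (fun z' => (ccnf_vf vz vtau x (z', tau1)).1 ord0 i * w z'),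
     Rintegral mu Z'1 (fun z' => (ccnf_vf vz vtau x (z', tau1)).2 * w z')).

(* Main.v *)
Require Import Defs.
From HB Require Import structures.
From mathcomp Require Import all_boot all_order all_algebra.
From mathcomp Require Import all_classical all_reals all_analysis.
Import Order.TTheory GRing.Theory Num.Theory.
Import numFieldNormedType.Exports.
From mathcomp Require Import ring lra.
Local Open Scope classical_set_scope.
Local Open Scope ring_scope.

Lemma sepW (R : realType) n (K : set ('I_n -> R)) :
  (forall a b, K a -> K b -> K (fun i => a i + b i)) ->
  (forall c a, 0 < c -> K a -> K (fun i => c * a i)) ->
  ~ K (fun _ => 0) -> (exists a, K a) ->
  exists l : 'I_n -> R, (exists j, l j != 0) /\
    forall a, K a -> 0 <= \sum_i l i * a i.
Proof.
elim: n K => [|n IH] K Kadd Kscale K0 [a0 Ka0].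
  exfalso; apply: K0; suff -> : (fun _ : 'I_0 => 0 : R) = a0 by [].
  by apply: funext => -[].
have [Kpos|] := pselect (forall a, K a -> 0 <= a ord0).
  exists (fun i => (i == ord0)%:R); split; first by exists ord0; rewrite eqxx oner_neq0.
  move=> a Ka; rewrite big_ord_recl eqxx mul1r big1 ?addr0; first exact: Kpos.
  by move=> i _; rewrite eq_sym (negbTE (neq_lift _ _)) mul0r.
move=> /existsNP[a2 /not_implyP[Ka2 /negP]]; rewrite -ltNge => a2neg.
have [Kneg|] := pselect (forall a, K a -> a ord0 <= 0).
  exists (fun i => - (i == ord0)%:R); split; first by exists ord0; rewrite eqxx oppr_eq0 oner_neq0.
  move=> a Ka; rewrite big_ord_recl eqxx mulN1r big1 ?addr0; first by rewrite oppr_ge0; exact: Kneg.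
  by move=> i _; rewrite eq_sym (negbTE (neq_lift _ _)) oppr0 mul0r.
move=> /existsNP[a1 /not_implyP[Ka1 /negP]]; rewrite -ltNge => a1pos.
pose K' := [set y : 'I_n -> R | exists a, K a /\ a ord0 = 0 /\ forall i, a (lift ord0 i) = y i].
have K'add : forall a b, K' a -> K' b -> K' (fun i => a i + b i).
  move=> y1 y2 [b1 [Kb1 [b10 eb1]]] [b2 [Kb2 [b20 eb2]]].
  exists (fun i => b1 i + b2 i); split; first exact: Kadd.
  by split; [rewrite b10 b20 addr0|move=> i; rewrite eb1 eb2].
have K'scale : forall c a, 0 < c -> K' a -> K' (fun i => c * a i).
  move=> c y c0 [b [Kb [b0 eb]]]; exists (fun i => c * b i); split; first exact: Kscale.
  by split; [rewrite b0 mulr0|move=> i; rewrite eb].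
have K'0 : ~ K' (fun _ => 0).
  move=> [b [Kb [b0 eb]]]; apply: K0; suff <- : b = (fun _ => 0) by [].
  apply: funext => i; case: (unliftP ord0 i) => [j ->|->] //; exact: eb.
pose comb := fun i => (- a2 ord0) * a1 i + a1 ord0 * a2 i.
have Kcomb : K comb.
  apply: Kadd; apply: Kscale => //; by rewrite ?oppr_gt0.
have K'ne : exists y, K' y.
  exists (fun i => comb (lift ord0 i)), comb; split => //; split => //.
  by rewrite /comb; ring.
have [l' [[j lj] l'pos]] := IH K' K'add K'scale K'0 K'ne.
pose L := fun a : 'I_n.+1 -> R => \sum_i l' i * a (lift ord0 i).
have Lcomb : forall a b, 0 < a ord0 -> b ord0 < 0 -> K a -> K b ->
    - (L a / a ord0) <= L b / (- b ord0).
  move=> a b apos bneg Ka Kb.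
  pose c := fun i => (- b ord0) * a i + a ord0 * b i.
  have Kc : K c by apply: Kadd; apply: Kscale => //; rewrite ?oppr_gt0.
  have : 0 <= L c.
    apply: l'pos; exists c; split => //; split => //.
    by rewrite /c; ring.
  have -> : L c = (- b ord0) * L a + a ord0 * L b.
    rewrite /L /c !mulr_sumr -big_split /=; apply: eq_bigr => i _; lra.
  move=> H.
  have bpos : 0 < - b ord0 by rewrite oppr_gt0.
  rewrite -subr_ge0 opprK.
  have -> : L b / - b ord0 + L a / a ord0 = ((- b ord0) * L a + a ord0 * L b) / (a ord0 * (- b ord0)).
    by field; rewrite lt_eqF // gt_eqF.
  by apply: divr_ge0 => //; apply: mulr_ge0; apply: ltW.
pose S := [set r : R | exists a, K a /\ 0 < a ord0 /\ r = - (L a / a ord0)].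
have Sne : S !=set0 by exists (- (L a1 / a1 ord0)), a1.
have Sub : forall b, K b -> b ord0 < 0 -> ubound S (L b / (- b ord0)).
  by move=> b Kb bneg r [a [Ka [apos ->]]]; apply: Lcomb.
have Shas : has_ubound S by exists (L a2 / (- a2 ord0)); exact: Sub.
pose c := sup S.
exists (fun i => if unlift ord0 i is Some k then l' k else c); split.
  by exists (lift ord0 j); rewrite liftK.
move=> a Ka; rewrite big_ord_recl unlift_none.
under eq_bigr do rewrite liftK.
rewrite -/(L a).
have [aneg|apos|aeq0] := ltgtP (a ord0) 0.
- have : c <= L a / (- a ord0) by apply: ge_sup => //; exact: Sub.
  have an : 0 < - a ord0 by rewrite oppr_gt0.
  rewrite ler_pdivlMr // => H; nra.
- have : - (L a / a ord0) <= c by apply: ub_le_sup => //; exists a.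
  have e : L a = (L a / a ord0) * a ord0 by rewrite divfK // gt_eqF.
  move: (L a / a ord0) e => q -> H; nra.
- rewrite aeq0 mulr0 add0r; apply: l'pos; exists a; split => //.
Qed.

Definition cvx0 d (T : measurableType d) (R : realType) n (D : set T) (w : T -> R)
  (g : T -> 'I_n -> R) :=
  exists k (lam : 'I_k -> R) (zs : 'I_k -> T), (forall a, 0 <= lam a) /\
    \sum_a lam a = 1 /\ (forall a, D (zs a) /\ 0 < w (zs a)) /\
    forall i, \sum_a lam a * g (zs a) i = 0.
Arguments cvx0 {d T R n}.

Section Qsec.
Context d (T : measurableType d) (R : realType) (mu : {measure set T -> \bar R}).
Implicit Types (D : set T) (w : T -> R).

Lemma pos_point {D : set T} {w : T -> R} :
  (forall z, D z -> 0 <= w z) ->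
  (0 < \int[mu]_(z in D) (w z)%:E)%E -> exists z, D z /\ 0 < w z.
Proof.
move=> w0 ipos; apply: contrapT => nz; move: ipos.
rewrite integral0_eq ?ltxx // => z Dz; congr EFin.
apply/eqP; rewrite eq_le w0 // andbT leNgt; apply/negP => wz; apply: nz; by exists z.
Qed.

Lemma split_l m n (i : 'I_m) : fintype.split (lshift n i) = inl i.
Proof. exact: (unsplitK (inl i : 'I_m + 'I_n)). Qed.
Lemma split_r m n (i : 'I_n) : fintype.split (rshift m i) = inr i.
Proof. exact: (unsplitK (inr i : 'I_m + 'I_n)). Qed.

Lemma baryQ n : forall (D : set T) (w : T -> R) (g : T -> 'I_n -> R),
  measurable D -> (forall z, D z -> 0 <= w z) ->
  mu.-integrable D (fun z => (w z)%:E) ->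
  (0 < \int[mu]_(z in D) (w z)%:E)%E ->
  (forall i, mu.-integrable D (fun z => (g z i * w z)%:E)) ->
  (forall i, \int[mu]_(z in D) (g z i * w z)%:E = 0)%E ->
  cvx0 D w g.
Proof.
elim: n => [|n IH] D w g mD w0 iw wpos ig ig0.
  have [z [Dz wz]] := pos_point w0 wpos.
  exists 1%N, (fun _ => 1), (fun _ => z); split => //; split; first by rewrite big_ord1.
  by split => // -[].
have [z0 [Dz0 wz0]] := pos_point w0 wpos.
have [//|nP] := pselect (cvx0 D w g).
pose K := [set x : 'I_n.+1 -> R | exists k (lam : 'I_k -> R) (zs : 'I_k -> T),
  (forall a, 0 <= lam a) /\ 0 < \sum_a lam a /\ (forall a, D (zs a) /\ 0 < w (zs a)) /\
  forall i, x i = \sum_a lam a * g (zs a) i].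
have Kadd : forall a b, K a -> K b -> K (fun i => a i + b i).
  move=> x1 x2 [k1 [l1 [z1 [l10 [l1p [z1D e1]]]]]] [k2 [l2 [z2 [l20 [l2p [z2D e2]]]]]].
  exists (k1 + k2)%N, (fun b => match fintype.split b with inl x => l1 x | inr y => l2 y end),
    (fun b => match fintype.split b with inl x => z1 x | inr y => z2 y end).
  split; first by move=> b; case: (fintype.split b).
  split.
    rewrite big_split_ord /=; apply: addr_gt0.
      by under eq_bigr do rewrite split_l.
    by under eq_bigr do rewrite split_r.
  split; first by move=> b; case: (fintype.split b).
  move=> i; rewrite big_split_ord /= e1 e2; congr (_ + _); apply: eq_bigr => b _.
    by rewrite split_l.
  by rewrite split_r.
have Kscale : forall c a, 0 < c -> K a -> K (fun i => c * a i).
  move=> c x c0 [k [l [zs [l0 [lp [zD e]]]]]].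
  exists k, (fun b => c * l b), zs; split; first by move=> b; apply: mulr_ge0 => //; exact: ltW.
  split; first by rewrite -mulr_sumr; exact: mulr_gt0.
  split => // i; rewrite e mulr_sumr; apply: eq_bigr => b _; by rewrite mulrA.
have K0 : ~ K (fun _ => 0).
  move=> [k [l [zs [l0 [lp [zD e]]]]]]; apply: nP.
  exists k, (fun b => l b / \sum_a l a), zs; split; first by move=> b; apply: divr_ge0 => //; exact: ltW.
  split; first by rewrite -mulr_suml divff // gt_eqF.
  split => // i; under eq_bigr do rewrite mulrAC; by rewrite -mulr_suml -e mul0r.
have Kg : forall z, D z -> 0 < w z -> K (g z).
  move=> z Dz wz; exists 1%N, (fun _ => 1), (fun _ => z); split => //; split; first by rewrite big_ord1.
  by split => // i; rewrite big_ord1 mul1r.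
have [l [[j lj] lpos]] := @sepW R n.+1 K Kadd Kscale K0 (ex_intro _ _ (Kg z0 Dz0 wz0)).
pose F z := \sum_i l i * (g z i * w z).
have FE : forall z, F z = (\sum_i l i * g z i) * w z.
  by move=> z; rewrite /F mulr_suml; apply: eq_bigr => i _; rewrite mulrA.
have F0 : forall z, D z -> 0 <= F z.
  move=> z Dz; rewrite FE; have := w0 z Dz; rewrite le_eqVlt => /orP[/eqP <-|wz].
    by rewrite mulr0.
  by apply: mulr_ge0; [exact: lpos (Kg z Dz wz)|exact: ltW].
have FEf : (fun z => (F z)%:E) = (fun z => (\sum_i (l i)%:E * (g z i * w z)%:E)%E).
  by apply: funext => z; rewrite sumEFin.
have iF : mu.-integrable D (fun z => (F z)%:E).
  rewrite FEf; apply: (integrable_sum mD) => i _; exact: (integrableZl mD).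
have intF : (\int[mu]_(z in D) (F z)%:E = 0)%E.
  rewrite FEf (integral_sum mD); last by move=> i; exact: (integrableZl mD).
  by rewrite big1 // => i _; rewrite (integralZl mD (ig i)) ig0 mule0.
have : ae_eq mu D (fun z => (F z)%:E) (cst 0%E).
  apply/ae_eq_integral_abs => //; first exact: measurable_int iF.
  by rewrite -intF; apply: eq_integral => z /set_mem Dz; rewrite gee0_abs // lee_fin F0.
case=> N [mN [N0 subN]].
have mD1 : measurable (D `\` N) by exact: measurableD.
have sD1 : D `\` N `<=` D by move=> z [].
have [k [lam [zs [lam0 [lam1 [zsD hsum]]]]]] :=
  IH (D `\` N) w (fun z i => g z (lift j i)) mD1 (fun z Dz => w0 z (sD1 z Dz))
    (integrableS mD mD1 sD1 iw)
    (ltac:(by rewrite -(negligible_integral mN mD iw N0)))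
    (fun i => integrableS mD mD1 sD1 (ig (lift j i)))
    (fun i => ltac:(by rewrite -(negligible_integral mN mD (ig (lift j i)) N0) ig0)).
exfalso; apply: nP; exists k, lam, zs; split => //; split => //.
split; first by move=> a; have [[Dz _] wz] := zsD a.
have Fz : forall a, F (zs a) = 0.
  move=> a; have [[Dz nN] wz] := zsD a; apply: contrapT => Fne; apply: nN; apply: subN => /= H.
  by apply: Fne; have := H Dz; case.
have lg0 : forall a, \sum_i l i * g (zs a) i = 0.
  move=> a; have := Fz a; rewrite FE => /eqP; rewrite mulf_eq0 => /orP[/eqP //|/eqP wz].
  by have [_ ] := zsD a; rewrite wz ltxx.
pose x i := \sum_a lam a * g (zs a) i.
have xl : forall i, x (lift j i) = 0 by move=> i; exact: hsum.
have xj : x j = 0.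
  have : \sum_i l i * x i = 0.
    rewrite /x; under eq_bigr do rewrite mulr_sumr.
    rewrite exchange_big /= big1 // => a _.
    by under eq_bigr do rewrite mulrCA; rewrite -mulr_sumr lg0 mulr0.
  rewrite (bigD1 j) //= big1 ?addr0; first by move/eqP; rewrite mulf_eq0 (negbTE lj) => /eqP.
  move=> i /negbTE; case: (unliftP j i) => [i' ->|->]; last by rewrite eqxx.
  by rewrite xl mulr0.
move=> i; case: (unliftP j i) => [i' ->|->]; [exact: xl|exact: xj].
Qed.

End Qsec.

Definition coord (R : realType) m (p : 'rV[R]_m * R) (i : 'I_m.+1) : R :=
  if unlift ord_max i is Some k then p.1 ord0 k else p.2.
Arguments coord {R m}.

Lemma coord_inj (R : realType) m (p q : 'rV[R]_m * R) :
  (forall i, coord p i = coord q i) -> p = q.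
Proof.
move=> H; case: p q H => [p1 p2] [q1 q2] H; congr pair.
  apply/rowP => k; have := H (lift ord_max k); rewrite /coord liftK /=.
  by rewrite !(ord1 (0 : 'I_1)) .
by have := H ord_max; rewrite /coord unlift_none.
Qed.

Lemma coord_sum (R : realType) m k (F : 'I_k -> 'rV[R]_m * R) (c : 'I_k -> R) i :
  coord (\sum_a c a *: F a) i = \sum_a c a * coord (F a) i.
Proof.
rewrite /coord; case: (unlift ord_max i) => [j|].
  have -> : forall G : 'I_k -> 'rV[R]_m * R, (\sum_a G a).1 = \sum_a (G a).1.
    by move=> G; apply: (big_morph fst) => //.
  by rewrite summxE; apply: eq_bigr => a _; rewrite /= mxE.
have -> : forall G : 'I_k -> 'rV[R]_m * R, (\sum_a G a).2 = \sum_a (G a).2.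
  by move=> G; apply: (big_morph snd) => //.
by [].
Qed.
Theorem corollary4p14 (R : realType) (m : nat)
  (mu : {measure set (Zsp R m) -> \bar R})
  (Zs : set 'rV[R]_m) (Ts : set R) (X' : set ('rV[R]_m * R))
  (tau0 tau1 : R)
  (vz : 'rV[R]_m -> 'rV[R]_m -> 'rV[R]_m) (vtau : R -> R -> R)
  (pz' : 'rV[R]_m -> R -> 'rV[R]_m -> R) (qz' : 'rV[R]_m -> R)
  (psi : 'rV[R]_m * R -> R -> 'rV[R]_m * R) :
  (* target set X' inside X = Z x T; tau0 <> tau1 *)
  X' `<=` Zs `*` Ts ->
  tau0 != tau1 ->
  measurable [set z' : Zsp R m | X' (z', tau1)] ->
  (* q'_z is a probability density on the target slice (q'_tau = delta_tau1) *)
  (forall z', 0 <= qz' z') ->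
  measurable_fun [set z' : Zsp R m | X' (z', tau1)] (qz' : Zsp R m -> R) ->
  (\int[mu]_(z' in [set z' : Zsp R m | X' (z', tau1)]) (qz' z')%:E = 1)%E ->
  (* p'_z(., t | z') are probability densities on Z *)
  (forall z t z', 0 <= pz' z t z') ->
  (forall t z', 0 <= t ->
     (\int[mu]_(z in (Zs : set (Zsp R m))) (pz' z t z')%:E = 1)%E) ->
  (* the MCNF density is positive, so that v is well defined *)
  (forall z t, Zs z -> 0 <= t -> 0 < mcnf_pz mu X' tau1 pz' qz' z t) ->
  (* the integrals defining p and v exist *)
  (forall z t, Zs z -> 0 <= t ->
     mu.-integrable [set z' : Zsp R m | X' (z', tau1)]
       (fun z' : Zsp R m => (pz' z t z' * qz' z')%:E)) ->
  (forall z tau t (i : 'I_m), Zs z -> Ts tau -> 0 <= t ->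
     mu.-integrable [set z' : Zsp R m | X' (z', tau1)]
       (fun z' : Zsp R m =>
          ((ccnf_vf vz vtau (z, tau) (z', tau1)).1 ord0 i
             * (pz' z t z' * qz' z'))%:E)) ->
  (forall z tau t, Zs z -> Ts tau -> 0 <= t ->
     mu.-integrable [set z' : Zsp R m | X' (z', tau1)]
       (fun z' : Zsp R m =>
          ((ccnf_vf vz vtau (z, tau) (z', tau1)).2
             * (pz' z t z' * qz' z'))%:E)) ->
  (* psi is the flow map of the MCNF: it stays in X and
     d/dt psi(x,t) = v(psi(x,t),t) for t >= 0 *)
  (forall x t, (Zs `*` Ts) x -> 0 <= t -> (Zs `*` Ts) (psi x t)) ->
  (forall x t, (Zs `*` Ts) x -> 0 <= t ->
     has_rderiv (psi x) t
       (mcnf_vf mu X' tau1 vz vtau pz' qz' (psi x t) t)) ->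
  forall x t, (Zs `*` Ts) x -> 0 <= t ->
    conv_hull (ccnf_vf vz vtau (psi x t) @` X') (rderiv (psi x) t).
Proof.
move=> X'sub tau01 mZ1 q0 mq qint p0 pint Ppos iP iV1 iV2 psiX psider x t xX t0.
have [yZ yT] := psiX x t xX t0.
set y := psi x t in yZ yT *.
set b := mcnf_vf mu X' tau1 vz vtau pz' qz' y t.
have -> : rderiv (psi x) t = b by rewrite /rderiv; apply: cvg_lim => //; exact: psider.
set D := [set z' : Zsp R m | X' (z', tau1)].
pose w := fun z' : Zsp R m => pz' y.1 t z' * qz' z'.
pose v := fun (i : 'I_m.+1) (z' : Zsp R m) => coord (ccnf_vf vz vtau y (z', tau1)) i.
pose g := fun (z' : Zsp R m) (i : 'I_m.+1) => v i z' - coord b i.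
have iw : mu.-integrable D (fun z => (w z)%:E) := iP y.1 t yZ t0.
have iv : forall i, mu.-integrable D (fun z => (v i z * w z)%:E).
  move=> i; rewrite /v /coord; case: (unlift ord_max i) => [k|].
    exact: (iV1 y.1 y.2 t k yZ yT t0).
  exact: (iV2 y.1 y.2 t yZ yT t0).
set P := mcnf_pz mu X' tau1 pz' qz' y.1 t.
have PE : P%:E = (\int[mu]_(z in D) (w z)%:E)%E.
  by rewrite /P /mcnf_pz /Rintegral fineK // (integrable_fin_num mZ1 iw).
have P0 : 0 < P := Ppos y.1 t yZ t0.
pose N := fun i => \int[mu]_(z in D) (v i z * w z).
have NE : forall i, (N i)%:E = (\int[mu]_(z in D) (v i z * w z)%:E)%E.
  by move=> i; rewrite /N /Rintegral fineK // (integrable_fin_num mZ1 (iv i)).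
have bE : forall i, coord b i = P^-1 * N i.
  move=> i; rewrite /b /mcnf_vf /coord /N /v /coord; case: (unlift ord_max i) => [k|] /=.
    by rewrite !mxE.
  by [].
have w0 : forall z, D z -> 0 <= w z by move=> z _; exact: mulr_ge0.
have wpos : (0 < \int[mu]_(z in D) (w z)%:E)%E by rewrite -PE lte_fin.
have gE : forall i, (fun z => (g z i * w z)%:E) =
    (fun z => (v i z * w z)%:E + (- coord b i)%:E * (w z)%:E)%E.
  by move=> i; apply: funext => z; rewrite -EFinM -EFinD /g; congr EFin; ring.
have ig : forall i, mu.-integrable D (fun z => (g z i * w z)%:E).
  move=> i; rewrite gE; exact: (integrableD mZ1 (iv i) (integrableZl mZ1 _ iw)).
have ig0 : forall i, (\int[mu]_(z in D) (g z i * w z)%:E = 0)%E.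
  move=> i; rewrite gE (integralD mZ1 (iv i) (integrableZl mZ1 _ iw)).
  rewrite (integralZl mZ1 iw) -NE -PE bE -EFinM -EFinD; congr EFin.
  by field; rewrite gt_eqF.
have [k [lam [zs [lam0 [lam1 [zsD hsum]]]]]] :=
  @baryQ _ _ _ mu m.+1 D w g mZ1 w0 iw wpos ig ig0.
exists k, lam, (fun a => ccnf_vf vz vtau y (zs a, tau1)).
split => //; split => //; split.
  by move=> a; exists (zs a, tau1) => //; have [] := zsD a.
apply: coord_inj => i; rewrite coord_sum.
have := hsum i; rewrite /g; under eq_bigr do rewrite mulrBr.
rewrite sumrB -mulr_suml lam1 mul1r => /eqP; rewrite subr_eq0 => /eqP <-.
by [].
Qed.
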